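(* Let $p$ be an odd prime and let $n,s$ be positive integers such that $2n/s\geq 3$ is an odd integer; put $q=p^n$, $d=p^s$, and $f(X)=X^{d+1}\in\mathbb{F}_{q^2}[X]$. Then the graph $\mathcal{A}_{q^2,d}$ is isomorphic to the subgraph of $G_f$ induced by the vertex set $\mathbb{F}_{q^2}\times\mathbb{F}_{q^2}$ (the points $(x,y)$ of $\Pi_f$).
   Context: The map $x\mapsto x^d+x$ is a bijection of $\mathbb{F}_{q^2}$. The graph $\mathcal{A}_{q^2,d}$ has vertex set $\mathbb{F}_{q^2}\times\mathbb{F}_{q^2}$; writing vertices as $(a^d+a,x)$ and $(b^d+b,y)$ with $a,b,x,y\in\mathbb{F}_{q^2}$ (uniquely), two distinct vertices are adjacent iff $a^db+ab^d=x+y$. The graph $G_f$ is the orthogonal polarity graph of the plane $\Pi_f$ over $\mathbb{F}_{q^2}$; on its vertices of the form $(x,y)$ with $x,y\in\mathbb{F}_{q^2}$, two distinct vertices $(x_1,y_1)$ and $(x_2,y_2)$ are adjacent iff $f(x_1+x_2)=y_1+y_2$. *)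

(* Defs.v *)
From HB Require Import structures.
From mathcomp Require Import all_boot all_order all_algebra all_field.
Set Implicit Arguments. Unset Strict Implicit. Unset Printing Implicit Defensive.
Import GRing.Theory.
Local Open Scope ring_scope.

(* Adjacency in the graph A_{q^2,d} on vertex set F x F:
   writing u = (a^d + a, x), v = (b^d + b, y) (unique since x |-> x^d + x is
   a bijection of F), distinct u, v are adjacent iff a^d b + a b^d = x + y. *)
Definition adjA (F : finFieldType) (d : nat) (u v : F * F) : Prop :=
  u <> v /\
  exists a b : F, u.1 = a ^+ d + a /\ v.1 = b ^+ d + b /\
                  a ^+ d * b + a * b ^+ d = u.2 + v.2.

Definition adjG (F : finFieldType) (f : {poly F}) (u v : F * F) : Prop :=
  u <> v /\ f.[u.1 + v.1] = u.2 + v.2.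

Definition graph_iso (V W : Type) (e1 : V -> V -> Prop) (e2 : W -> W -> Prop)
  : Prop :=
  exists g : V -> W, bijective g /\ forall u v, e1 u v <-> e2 (g u) (g v).

(* Main.v *)
Require Import Defs.
From HB Require Import structures.
From mathcomp Require Import all_boot all_order all_algebra all_field.
From mathcomp Require Import ring.
Import GRing.Theory.
Local Open Scope ring_scope.

Section Aux.
Variables (F : finFieldType) (p d m : nat).
Hypothesis pchar : p \in [char F].
Hypothesis podd : odd p.
Hypothesis dodd : odd d.
Hypothesis modd : odd m.
Hypothesis frob : forall x y : F, (x + y) ^+ d = x ^+ d + y ^+ d.
Hypothesis dm : (d ^ m)%N = #|F|.

Definition phi (a : F) := a ^+ d + a.

Lemma frobN (x : F) : (- x) ^+ d = - x ^+ d.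
Proof.
have := frob (- x) x; rewrite addNr expr0n.
have d0 : d != 0%N by apply/eqP => d0; move: dodd; rewrite d0.
rewrite (negPf d0) => /esym/eqP; rewrite addr_eq0 => /eqP //.
Qed.

Lemma phi_inj : injective phi.
Proof.
move=> x y /eqP; rewrite -subr_eq0.
have -> : phi x - phi y = phi (x - y).
  rewrite /phi frob frobN; ring.
set a := x - y => /eqP ha.
have had : a ^+ d = - a by apply/eqP; rewrite -addr_eq0 -[_ + _]/(phi a) ha.
have key : forall k, a ^+ (d ^ k) = (-1) ^+ k * a.
  elim=> [|k IH]; first by rewrite expn0 expr1 expr0 mul1r.
  rewrite expnS exprM had -[- a]mulN1r exprMn IH -[(-1) ^+ (d ^ k)]signr_odd oddX dodd orbT expr1.
  by rewrite exprS mulrA.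
have := key m; rewrite dm expf_card -signr_odd modd expr1 mulN1r => /eqP.
rewrite -addr_eq0 => /eqP h2.
have : a *+ p = 0 by rewrite (mulrn_pchar pchar).
rewrite -(odd_double_half p) podd mulrnDr -muln2 mulnC mulrnA mulr2n h2 mul0rn addr0.
by move/eqP; rewrite subr_eq0 => /eqP.
Qed.

Definition psi := invF phi_inj.

Definition gmap (u : F * F) : F * F := (psi u.1, u.2 + psi u.1 ^+ d.+1).
Definition hmap (w : F * F) : F * F := (phi w.1, w.2 - w.1 ^+ d.+1).

Lemma gK : cancel gmap hmap.
Proof. by case=> x y; rewrite /gmap /hmap /psi /= f_invF addrK. Qed.
Lemma hK : cancel hmap gmap.
Proof. by case=> x y; rewrite /gmap /hmap /psi /= invF_f subrK. Qed.

Lemma expand (a b : F) :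
  (a + b) ^+ d.+1 = a ^+ d * b + a * b ^+ d + a ^+ d.+1 + b ^+ d.+1.
Proof. rewrite !exprS frob; ring. Qed.

Lemma main_iso : graph_iso (adjA (F := F) d) (adjG ('X ^+ d.+1 : {poly F})).
Proof.
exists gmap; split; first by exists hmap; [exact: gK | exact: hK].
move=> u v; split.
- case=> neq [a [b [ha [hb he]]]]; split.
    by move=> /(congr1 hmap); rewrite !gK.
  rewrite hornerXn /gmap /psi /= ha hb !invF_f expand he; ring.
- case=> neq; rewrite hornerXn /gmap /psi /= expand => he; split.
    by move=> e; apply: neq; rewrite e.
  exists (psi u.1), (psi v.1); split; first by rewrite -[LHS](f_invF phi_inj).
  split; first by rewrite -[LHS](f_invF phi_inj).
  apply/eqP; rewrite -(subr_eq0 _ (u.2 + v.2)).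
  apply/eqP; move: he => /eqP; rewrite -subr_eq0 => /eqP <-; rewrite /psi; ring.
Qed.
End Aux.

Theorem lemma6 (p n s : nat) (F : finFieldType) :
  prime p -> odd p -> (0 < n)%N -> (0 < s)%N ->
  (s %| 2 * n)%N -> odd (2 * n %/ s) -> (3 <= 2 * n %/ s)%N ->
  #|F| = ((p ^ n) ^ 2)%N ->
  graph_iso (adjA (F := F) (p ^ s)%N)
            (adjG ('X ^+ (p ^ s).+1 : {poly F})).
Proof.
move=> pr po n0 s0 sdvd modd m3 card.
have pc : p \in [char F] by apply: (card_finPcharP (n := (n * 2)%N)); rewrite ?expnM.
apply: (@main_iso F p (p ^ s)%N (2 * n %/ s)%N pc po).
- by rewrite oddX po orbT.
- exact: modd.
- move=> x y; apply: exprDn_pchar.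
  by rewrite pnatX (pnatE _ pr) pc.
- by rewrite -expnM mulnC divnK // card -expnM mulnC.
Qed.
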